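(* (i) For all configurations $\gamma,\gamma'$ with $\gamma\to_d\gamma'$: $\gamma^{\bot}\le_d\gamma'^{\bot}$ and $\gamma'^{\top}\le_d\gamma^{\top}$. (ii) For all configurations $\gamma_0,\gamma$ such that $\gamma$ is reachable from $\gamma_0$ by a finite number (possibly zero) of d-steps: $\gamma_0^{\bot}\le_d\gamma\le_d\gamma_0^{\top}$.
   Context: Let $G$ be a finite, connected, undirected graph with node set $V$ and a distinguished node $r$ (the root); $\mathrm{dist}(p,r)$ denotes graph distance. Each node $p$ has a fixed ordered list $N(p)$ of its neighbours. A configuration $\gamma$ assigns to each node $p$ a value $\gamma.p.d\in\mathbb N$ and a neighbour $\gamma.p.par\in N(p)$. For a non-root node $p$ let $Dist_p(\gamma)=\min\{\gamma.q.d+1 : q\in N(p)\}$. Algorithm BFS: Root enabled iff $\gamma.r.d\neq 0$, executing sets $r.d:=0$. Non-root $p$, action CD: enabled iff $\gamma.p.d\ne Dist_p(\gamma)$, executing sets $p.d:=Dist_p(\gamma)$. Non-root $p$, action CP: enabled iff $\gamma.p.d=Dist_p(\gamma)$ and $\gamma.q_0.d+1\neq\gamma.p.d$ with $q_0=\gamma.p.par$; executing sets $p.par$ to the first $q\in N(p)$ with $\gamma.q.d+1=\gamma.p.d$. A step $\gamma\to\gamma'$ holds iff a nonempty set $S$ of enabled nodes simultaneously execute their enabled action (evaluated in $\gamma$), others unchanged. A d-step $\gamma\to_d\gamma'$ is a step with $\gamma.r.d=\gamma'.r.d$ and $\gamma.p.d\neq\gamma'.p.d$ for some $p$. $\min_d\gamma=\min\{\gamma.q.d:q\in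 V\}$. Bottom/top configurations: equal to $\gamma$ except $\gamma^{\bot}.p.d=\min_d\gamma$ for all $p$; $\gamma^{\top}.r.d=\gamma.r.d$ and for $p\neq r$, $\gamma^{\top}.p.d=\max\big(\gamma.p.d,\;1+\min\{\gamma^{\top}.q.d : q \text{ adjacent to } p,\ \mathrm{dist}(p,r)=1+\mathrm{dist}(q,r)\}\big)$. $\gamma_1\le_d\gamma_2$ iff $\gamma_1.q.d\le\gamma_2.q.d$ for all $q\in V$. *)

(* Defs.v *)
From mathcomp Require Import all_boot.
Set Implicit Arguments. Unset Strict Implicit. Unset Printing Implicit Defensive.

Section BFS.
(* Graph: finite node type V, symmetric irreflexive adjacency e, root r,
   ordered neighbour lists N p (duplicate-free, listing exactly the neighbours). *)
Variables (V : finType) (e : rel V) (N : V -> seq V) (r : V).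

(* minimum of a nonempty list of naturals (0 on the empty list) *)
Definition minl (s : seq nat) : nat := foldr minn (head 0 s) s.

Fixpoint ball (q : V) (k : nat) : {set V} :=
  match k with
  | 0 => [set q]
  | k'.+1 => ball q k' :|: [set p | [exists x in ball q k', e x p]]
  end.

(* graph distance (for a connected graph every distance is < #|V|) *)
Definition dist (p q : V) : nat := find (fun k => p \in ball q k) (iota 0 #|V|).

Record config := Config { cd : V -> nat; cpar : V -> V }.

Definition valid (g : config) : Prop := forall p, cpar g p \in N p.

Definition Dist (g : config) (p : V) : nat := minl [seq cd g q + 1 | q <- N p].

Definition enabled (g : config) (p : V) : bool :=
  if p == r then cd g r != 0
  else (cd g p != Dist g p) ||
       ((cd g p == Dist g p) && (cd g (cpar g p) + 1 != cd g p)).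

Definition exec (g : config) (p : V) : nat * V :=
  if p == r then (0, cpar g p)
  else if cd g p != Dist g p then (Dist g p, cpar g p)
  else (cd g p, nth p (N p) (find (fun q => cd g q + 1 == cd g p) (N p))).

Definition step (g g' : config) : Prop :=
  exists S : {set V}, S != set0 /\ (forall p, p \in S -> enabled g p) /\
    forall p, (cd g' p, cpar g' p) =
              (if p \in S then exec g p else (cd g p, cpar g p)).

Definition dstep (g g' : config) : Prop :=
  step g g' /\ cd g r = cd g' r /\ exists p, cd g p != cd g' p.

Inductive dreach : config -> config -> Prop :=
  | dreach_refl g : dreach g g
  | dreach_step g g' g'' : dstep g g' -> dreach g' g'' -> dreach g g''.

Definition min_d (g : config) : nat := minl [seq cd g q | q <- enum V].

Definition bot (g : config) : config := Config (fun _ => min_d g) (cpar g).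

Fixpoint topd (g : config) (k : nat) (p : V) : nat :=
  match k with
  | 0 => cd g p
  | k'.+1 => maxn (cd g p)
      (1 + minl [seq topd g k' q | q <- enum V & e p q && (dist q r == k')])
  end.

Definition top (g : config) : config :=
  Config (fun p => if p == r then cd g r else topd g (dist p r) p) (cpar g).

Definition le_d (g1 g2 : config) : Prop := forall q, cd g1 q <= cd g2 q.

End BFS.

(* Main.v *)
Require Import Defs.
From mathcomp Require Import all_boot.
Set Implicit Arguments. Unset Strict Implicit.

Lemma minl_le (s : seq nat) x : x \in s -> minl s <= x.
Proof.
rewrite /minl; case: s => [//|a s]; rewrite /=.
suff H : forall b, x \in s -> foldr minn b s <= x.
  rewrite inE => /orP[/eqP->|/H h]; first by rewrite geq_minl.
  by rewrite (leq_trans (geq_minr _ _) (h a)).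
move=> b; elim: s => [//|c s IH] /=; rewrite inE => /orP[/eqP->|/IH h].
  by rewrite geq_minl.
by rewrite (leq_trans (geq_minr _ _) h).
Qed.

Lemma foldr_minn_mem (b : nat) s : foldr minn b s \in b :: s.
Proof.
elim: s => [|c s IH] /=; first by rewrite mem_head.
rewrite /minn; case: ifP => _; first by rewrite !inE eqxx orbT.
by move: IH; rewrite !inE => /orP[->|->]; rewrite ?orbT.
Qed.

Lemma minl_mem (s : seq nat) : s != [::] -> minl s \in s.
Proof.
rewrite /minl; case: s => [//|a s] _ /=.
rewrite /minn; case: ifP => _; first by rewrite mem_head.
exact: foldr_minn_mem.
Qed.

Lemma minl_ge m (s : seq nat) : s != [::] -> (forall x, x \in s -> m <= x) -> m <= minl s.
Proof. by move=> /minl_mem h H; apply: H. Qed.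

Lemma minl_mono (T : eqType) (s : seq T) (f g : T -> nat) :
  (forall x, x \in s -> f x <= g x) -> minl (map f s) <= minl (map g s).
Proof.
case: s => [//|a s] H.
have /mapP[x xs ->] := @minl_mem (map g (a :: s)) isT.
by apply: leq_trans (H x xs); apply: minl_le; apply: map_f.
Qed.

Lemma ball_S (V : finType) (e : rel V) q j : ball e q j \subset ball e q j.+1.
Proof. by rewrite /= subsetUl. Qed.

Lemma ball_mono (V : finType) (e : rel V) q j k : j <= k -> ball e q j \subset ball e q k.
Proof.
move=> /subnK <-; elim: (k - j) => [|m IH]; first by rewrite add0n subxx.
by rewrite addSn (subset_trans IH (ball_S _ _ _)).
Qed.

Lemma dist_ball (V : finType) (e : rel V) p q :
  dist e p q < #|V| -> p \in ball e q (dist e p q).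
Proof.
rewrite /dist => H.
have Hh : has (fun k => p \in ball e q k) (iota 0 #|V|) by rewrite has_find size_iota.
by have := nth_find 0 Hh; rewrite nth_iota.
Qed.

Lemma dist_min (V : finType) (e : rel V) p q j :
  j < #|V| -> p \in ball e q j -> dist e p q <= j.
Proof.
move=> Hj Hb; rewrite leqNgt; apply/negP => Hlt.
by have := before_find 0 Hlt; rewrite nth_iota // Hb.
Qed.

Lemma path_ball (V : finType) (e : rel V) x s :
  path e x s -> last x s \in ball e x (size s).
Proof.
elim/last_ind: s => [|s y IH]; first by rewrite /= inE.
rewrite rcons_path last_rcons size_rcons => /andP[/IH Hs Hy] /=.
by rewrite inE; apply/orP; right; rewrite inE; apply/existsP; exists (last x s); rewrite Hs.
Qed.

Lemma dist_lt (V : finType) (e : rel V) (e_conn : forall p q, connect e p q) p q :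
  dist e p q < #|V|.
Proof.
have /connectP[s Hp Hl] := e_conn q p.
case: (shortenP Hp) Hl => s' Hp' Hu _ Hl.
have Hsz : size s' < #|V|.
  by rewrite -ltnS -[(size s').+1]/(size (q :: s')) -(card_uniqP Hu) ltnS max_card.
apply: (leq_ltn_trans _ Hsz); apply: (dist_min Hsz).
rewrite Hl; exact: path_ball.
Qed.

Lemma dist0 (V : finType) (e : rel V) (e_conn : forall p q, connect e p q) p r :
  dist e p r = 0 -> p = r.
Proof.
move=> H; have := dist_ball (dist_lt e_conn p r); rewrite H /= inE.
by move/eqP.
Qed.

Lemma dist_rr (V : finType) (e : rel V) (e_conn : forall p q, connect e p q) r :
  dist e r r = 0.
Proof.
apply/eqP; rewrite -leqn0; apply: dist_min; last by rewrite /= inE.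
by apply: leq_ltn_trans (dist_lt e_conn r r).
Qed.

Lemma dist_pred (V : finType) (e : rel V) (e_sym : symmetric e)
  (e_conn : forall p q, connect e p q) p r :
  0 < dist e p r -> exists q, e p q && (dist e q r == (dist e p r).-1).
Proof.
move=> Hpos; have Hlt := dist_lt e_conn p r.
have Hb := dist_ball Hlt.
move: Hpos Hlt Hb; move Hd: (dist e p r) => d; case: d Hd => [//|k] Hk _ Hlt /=.
have Hk' : k < #|V| by apply: ltnW.
rewrite inE => /orP[Hb|].
  by have := dist_min Hk' Hb; rewrite Hk ltnn.
rewrite inE => /existsP[x /andP[Hx Hxp]].
exists x; rewrite e_sym Hxp /=.
have Hxk := dist_min Hk' Hx.
rewrite eqn_leq Hxk /= leqNgt; apply/negP => Hlt'.
have Hxd := dist_ball (leq_ltn_trans Hxk Hk').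
have : p \in ball e r (dist e x r).+1.
  by rewrite /= inE; apply/orP; right; rewrite inE; apply/existsP; exists x; rewrite Hxd.
move/(subsetP (ball_mono e r Hlt')) => Hpk.
by have := dist_min Hk' Hpk; rewrite Hk ltnn.
Qed.

Lemma step_cd (V : finType) (N : V -> seq V) r g g' p : step N r g g' ->
  cd g' p = cd g p \/ (p != r /\ cd g' p = Dist N g p) \/ p = r.
Proof.
case=> S [_ [_ H]]; have := congr1 fst (H p) => /= ->.
case: (p \in S); last by left.
rewrite /exec; case: eqP => [->|/eqP Hpr]; first by right; right.
case: ifP => _ /=; last by left.
by right; left.
Qed.

Lemma topd_ge (V : finType) (e : rel V) r g k p : cd g p <= topd e r g k p.
Proof. by case: k => [|k] //=; rewrite leq_maxl. Qed.

Lemma topd_step (V : finType) (e : rel V) (N : V -> seq V) (r : V)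
  (e_sym : symmetric e) (e_conn : forall p q, connect e p q)
  (N_nb : forall p q, (q \in N p) = e p q) g g' :
  dstep N r g g' -> forall k p, dist e p r = k -> topd e r g' k p <= topd e r g k p.
Proof.
move=> [Hs [Hr _]]; elim=> [|k IH] p Hd /=.
  by rewrite (dist0 e_conn Hd) Hr.
rewrite geq_max; apply/andP; split; last first.
  apply: leq_trans (leq_maxr _ _); rewrite leq_add2l; apply: minl_mono => x.
  by rewrite mem_filter => /andP[/andP[_ /eqP Hx] _]; apply: IH.
have Hpos : 0 < dist e p r by rewrite Hd.
case: (step_cd p Hs) => [->|[[_ ->]|Hpr]]; first exact: leq_maxl.
  have [q0 /andP[Hq0 Hq0d]] := dist_pred e_sym e_conn Hpos.
  set L := [seq _ | _ <- _].
  have HL : L != [::].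
    apply/eqP => HL; have : topd e r g k q0 \in L.
      by move: Hq0d; rewrite Hd /= => Hq0d; apply: map_f; rewrite mem_filter Hq0 Hq0d mem_enum.
    by rewrite HL.
  have /mapP[q1 Hq1 Hm] := minl_mem HL.
  move: Hq1; rewrite mem_filter => /andP[/andP[Hq1 _] _].
  apply: leq_trans (leq_maxr _ _); rewrite Hm add1n.
  apply: (@leq_trans (cd g q1).+1); last by rewrite ltnS topd_ge.
  rewrite /Dist -[(cd g q1).+1]addn1; apply: minl_le.
  by apply: (map_f (fun q => cd g q + 1)); rewrite N_nb.
by move: Hd; rewrite Hpr (dist_rr e_conn).
Qed.

Lemma top_step (V : finType) (e : rel V) (N : V -> seq V) (r : V)
  (e_sym : symmetric e) (e_conn : forall p q, connect e p q)
  (N_nb : forall p q, (q \in N p) = e p q) g g' :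
  dstep N r g g' -> le_d (top e r g') (top e r g).
Proof.
move=> Hs q /=; case: eqP => _.
  by case: Hs => [_ [-> _]].
exact: (topd_step e_sym e_conn N_nb Hs).
Qed.

Lemma bot_step (V : finType) (e : rel V) (N : V -> seq V) (r : V)
  (e_sym : symmetric e) (e_conn : forall p q, connect e p q)
  (N_nb : forall p q, (q \in N p) = e p q) g g' :
  dstep N r g g' -> le_d (bot g) (bot g').
Proof.
move=> [Hs [Hr _]] q /=; rewrite /min_d.
apply: minl_ge.
  by apply/eqP => H; have : cd g' r \in [seq cd g' q | q <- enum V];
    [apply: map_f; rewrite mem_enum | rewrite H].
move=> x /mapP[p _ ->].
have Hle : forall y, cd g y >= minl [seq cd g q | q <- enum V].
  by move=> y; apply: minl_le; apply: map_f; rewrite mem_enum.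
case: (step_cd p Hs) => [->|[[Hpr ->]|->]] //; last by rewrite -Hr.
have Hpos : 0 < dist e p r.
  by rewrite lt0n; apply/negP => /eqP /(dist0 e_conn) /eqP; rewrite (negPf Hpr).
have [q0 /andP[Hq0 _]] := dist_pred e_sym e_conn Hpos.
rewrite /Dist; set L := [seq _ | _ <- N p].
have HL : L != [::].
  apply/eqP => HL; have : cd g q0 + 1 \in L by apply: map_f; rewrite N_nb.
  by rewrite HL.
have /mapP[q1 _ ->] := minl_mem HL.
by apply: leq_trans (Hle q1) _; rewrite leq_addr.
Qed.

Theorem lemma4 (V : finType) (e : rel V) (N : V -> seq V) (r : V)
  (e_sym : symmetric e) (e_irr : irreflexive e)
  (e_conn : forall p q, connect e p q)
  (N_uniq : forall p, uniq (N p)) (N_nb : forall p q, (q \in N p) = e p q) :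
  (forall g g' : config V,
      valid N g -> valid N g' -> dstep N r g g' ->
      le_d (bot g) (bot g') /\ le_d (top e r g') (top e r g)) /\
  (forall g0 g : config V,
      valid N g0 -> dreach N r g0 g ->
      le_d (bot g0) g /\ le_d g (top e r g0)).
Proof.
split.
  move=> g g' _ _ Hs; split; first exact: (bot_step e_sym e_conn N_nb Hs).
  exact: (top_step e_sym e_conn N_nb Hs).
move=> g0 g _; elim=> {g0 g} [g|g g' g'' Hs _ [IH1 IH2]]; split => q.
- by rewrite /= /min_d; apply: minl_le; apply: map_f; rewrite mem_enum.
- rewrite /=; case: eqP => [->//|_]; exact: topd_ge.
- exact: leq_trans (bot_step e_sym e_conn N_nb Hs q) (IH1 q).
- exact: leq_trans (IH2 q) (top_step e_sym e_conn N_nb Hs q).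
Qed.
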